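(* Let $G$ be a finite simple graph. Then: (1) $G\in\mathcal{G}_0$ if and only if $G$ is a disjoint union of cliques. (2) $G\in\mathcal{G}_1$ if and only if $G$ is a comparability graph. (3) $G\in\mathcal{G}_2$ if and only if $G$ is an upper bound graph. (4) $G\in\mathcal{G}_{3'}$ if and only if $G$ is a half-closed upper bound graph. (5) $G\in\mathcal{G}_{3''}$ if and only if $G$ is a fully-closed upper bound graph. (6) $G\in\mathcal{G}_4$ if and only if $G$ is an extended-closed upper bound graph.
   Context: A finite topology $\tau$ on a finite set $X$ is a family of subsets of $X$ (the open sets) containing $\emptyset$ and $X$ and closed under unions and intersections; complements of open sets are closed sets. For distinct $x,y\in X$: - $x,y$ are $T_0$-separated if there is an open $U$ containing exactly one of $x,y$; - $T_1$-separated if there are open $U_x,U_y$ with $x\in U_x$, $y\notin U_x$, $y\in U_y$, $x\notin U_y$; - $T_2$-separated if there are disjoint open $U_x\ni x$, $U_y\ni y$; - $T_{3'}$-separated if (a) there exist a closed set $J$ and open sets $U_J,U_y$ with $x\in J\subseteq U_J$, $y\in U_y$, $U_J\cap U_y=\emptyset$, OR (b) there exist a closed set $K$ and open sets $U_x,U_K$ with $x\in U_x$, $y\in K\subseteq U_K$, $U_x\cap U_K=\emptyset$; - $T_{3''}$-separated if both (a) AND (b) hold; - $T_4$-separated if there exist closed sets $J,K$ and disjoint open sets $U_J,U_K$ with $x\in J\subseteq U_J$, $y\in K\subseteq U_K$. For $i\in\{0,1,2,3',3'',4\}$, $G_i(\tau)$ is the simple graph with vertex set $X$ in which distinct $x,y$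 are adjacent iff they are not $T_i$-separated, and $\mathcal{G}_i$ is the class of graphs isomorphic to $G_i(\tau)$ for some finite topology $\tau$. For a finite poset $P=(X,\le)$, define graphs on vertex set $X$ where distinct $x,y$ are adjacent iff: comparability graph: $x\le y$ or $y\le x$; upper bound graph: there is $z$ with $x\le z$ and $y\le z$; half-closed upper bound graph: there exist $a,b$ with $a\le x$, $a\le b$, $y\le b$ AND there exist $\alpha,\beta$ with $\alpha\le y$, $\alpha\le\beta$, $x\le\beta$; fully-closed upper bound graph: the same with OR in place of AND; extended-closed upper bound graph: there exist $a,b,c$ with $a\le x$, $b\le y$, $a\le c$, $b\le c$. A graph is a comparability graph (resp. upper bound graph, etc.) if it is isomorphic to the comparability graph (resp. upper bound graph, etc.) of some finite poset. *)

(* Defs.v *)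
From mathcomp Require Import all_boot.
Set Implicit Arguments. Unset Strict Implicit. Unset Printing Implicit Defensive.

Definition simple_graph (T : finType) (e : T -> T -> Prop) : Prop :=
  (forall x, ~ e x x) /\ (forall x y, e x y -> e y x).

Definition graph_iso (T1 T2 : finType) (e1 : T1 -> T1 -> Prop)
    (e2 : T2 -> T2 -> Prop) : Prop :=
  exists f : T1 -> T2, bijective f /\ forall x y, e1 x y <-> e2 (f x) (f y).

(* Disjoint union of cliques: vertices are labelled by components,
   distinct vertices adjacent iff they carry the same label. *)
Definition disjoint_union_of_cliques (T : finType) (e : T -> T -> Prop) : Prop :=
  exists c : T -> nat, forall x y, x <> y -> (e x y <-> c x = c y).

Definition is_topology (X : finType) (tau : {set {set X}}) : Prop :=
  set0 \in tau /\ setT \in tau /\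
  (forall U V, U \in tau -> V \in tau -> (U :|: V \in tau) /\ (U :&: V \in tau)).

Definition opn (X : finType) (tau : {set {set X}}) (U : {set X}) := U \in tau.
Definition cls (X : finType) (tau : {set {set X}}) (J : {set X}) := ~: J \in tau.

Section Sep.
Variables (X : finType) (tau : {set {set X}}).

Definition T0_sep (x y : X) : Prop :=
  exists U, opn tau U /\ ((x \in U /\ y \notin U) \/ (y \in U /\ x \notin U)).

Definition T1_sep (x y : X) : Prop :=
  exists Ux Uy, opn tau Ux /\ opn tau Uy /\
    x \in Ux /\ y \notin Ux /\ y \in Uy /\ x \notin Uy.

Definition T2_sep (x y : X) : Prop :=
  exists Ux Uy, opn tau Ux /\ opn tau Uy /\
    x \in Ux /\ y \in Uy /\ Ux :&: Uy = set0.

Definition T3a_sep (x y : X) : Prop :=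
  exists J UJ Uy, cls tau J /\ opn tau UJ /\ opn tau Uy /\
    x \in J /\ J \subset UJ /\ y \in Uy /\ UJ :&: Uy = set0.

Definition T3b_sep (x y : X) : Prop :=
  exists K Ux UK, cls tau K /\ opn tau Ux /\ opn tau UK /\
    x \in Ux /\ y \in K /\ K \subset UK /\ Ux :&: UK = set0.

Definition T3'_sep (x y : X) : Prop := T3a_sep x y \/ T3b_sep x y.
Definition T3''_sep (x y : X) : Prop := T3a_sep x y /\ T3b_sep x y.

Definition T4_sep (x y : X) : Prop :=
  exists J K UJ UK, cls tau J /\ cls tau K /\ opn tau UJ /\ opn tau UK /\
    x \in J /\ J \subset UJ /\ y \in K /\ K \subset UK /\ UJ :&: UK = set0.
End Sep.

Inductive sep_axiom := ST0 | ST1 | ST2 | ST3' | ST3'' | ST4.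

Definition sep (i : sep_axiom) (X : finType) (tau : {set {set X}}) : X -> X -> Prop :=
  match i with
  | ST0 => T0_sep tau | ST1 => T1_sep tau | ST2 => T2_sep tau
  | ST3' => T3'_sep tau | ST3'' => T3''_sep tau | ST4 => T4_sep tau
  end.

Definition sep_graph (i : sep_axiom) (X : finType) (tau : {set {set X}})
    (x y : X) : Prop := x <> y /\ ~ sep i tau x y.

Definition in_Gclass (i : sep_axiom) (T : finType) (e : T -> T -> Prop) : Prop :=
  exists (X : finType) (tau : {set {set X}}),
    is_topology tau /\ graph_iso e (sep_graph i tau).

Definition is_poset (X : finType) (le : rel X) : Prop :=
  reflexive le /\ antisymmetric le /\ transitive le.

Section PosetGraphs.
Variables (X : finType) (le : rel X).

Definition comparability_graph (x y : X) : Prop :=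
  x <> y /\ (le x y \/ le y x).

Definition ub_graph (x y : X) : Prop :=
  x <> y /\ exists z, le x z /\ le y z.

Definition half_closed_ub_graph (x y : X) : Prop :=
  x <> y /\
  (exists a b, le a x /\ le a b /\ le y b) /\
  (exists al be, le al y /\ le al be /\ le x be).

Definition fully_closed_ub_graph (x y : X) : Prop :=
  x <> y /\
  ((exists a b, le a x /\ le a b /\ le y b) \/
   (exists al be, le al y /\ le al be /\ le x be)).

Definition extended_closed_ub_graph (x y : X) : Prop :=
  x <> y /\ exists a b c, le a x /\ le b y /\ le a c /\ le b c.
End PosetGraphs.

Definition is_poset_graph
    (gr : forall X : finType, rel X -> X -> X -> Prop)
    (T : finType) (e : T -> T -> Prop) : Prop :=
  exists (X : finType) (le : rel X), is_poset le /\ graph_iso e (gr X le).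

(* Main.v *)
Require Import Defs.
From mathcomp Require Import all_boot.
From Stdlib Require Import Classical FunctionalExtensionality.
Set Implicit Arguments. Unset Strict Implicit. Unset Printing Implicit Defensive.

Definition sle (X : finType) (tau : {set {set X}}) : rel X :=
  fun x y => [forall U : {set X}, (U \in tau) ==> (x \in U) ==> (y \in U)].

Lemma sleP (X : finType) (tau : {set {set X}}) x y :
  reflect (forall U, U \in tau -> x \in U -> y \in U) (sle tau x y).
Proof.
apply: (iffP forallP) => H U.
  by move=> HU Hx; move: (H U); rewrite HU Hx.
by apply/implyP => HU; apply/implyP; apply: H.
Qed.

Lemma sle_refl (X : finType) (tau : {set {set X}}) x : sle tau x x.
Proof. by apply/sleP. Qed.

Lemma sle_trans (X : finType) (tau : {set {set X}}) x y z :
  sle tau x y -> sle tau y z -> sle tau x z.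
Proof. move=> /sleP H1 /sleP H2; apply/sleP => U HU Hx; apply: H2 => //; exact: H1. Qed.

Lemma open_up (X : finType) (tau : {set {set X}}) U x y :
  U \in tau -> x \in U -> sle tau x y -> y \in U.
Proof. by move=> HU Hx /sleP H; apply: H. Qed.

Lemma up_open (X : finType) (tau : {set {set X}}) x :
  is_topology tau -> [set y | sle tau x y] \in tau.
Proof.
move=> [H0 [HT HUI]].
have -> : [set y | sle tau x y] = \bigcap_(U | (U \in tau) && (x \in U)) U.
  apply/setP => y; rewrite inE; apply/sleP/bigcapP => H U.
    by move=> /andP[]; apply: H.
  by move=> HU Hx; apply: H; rewrite HU Hx.
apply: (big_ind (fun S => S \in tau)) => //.
  by move=> A B HA HB; case: (HUI A B HA HB).
by move=> U /andP[].
Qed.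

Lemma upclosed_open (X : finType) (tau : {set {set X}}) (S : {set X}) :
  is_topology tau -> (forall a b, a \in S -> sle tau a b -> b \in S) -> S \in tau.
Proof.
move=> Ht HS; have [H0 [HT HUI]] := Ht.
have -> : S = \bigcup_(a in S) [set y | sle tau a y].
  apply/setP => y; apply/idP/bigcupP.
    by move=> Hy; exists y => //; rewrite inE sle_refl.
  by move=> [a Ha]; rewrite inE; apply: HS.
apply: (big_ind (fun S => S \in tau)) => //.
  by move=> A B HA HB; case: (HUI A B HA HB).
by move=> a _; apply: up_open.
Qed.

Definition A3 (X : finType) (r : rel X) (x y : X) : Prop :=
  exists a b, r a x /\ r a b /\ r y b.
Definition A4 (X : finType) (r : rel X) (x y : X) : Prop :=
  exists a b c, r a x /\ r b y /\ r a c /\ r b c.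

Lemma T0_iff (X : finType) (tau : {set {set X}}) x y : is_topology tau ->
  (T0_sep tau x y <-> ~ (sle tau x y /\ sle tau y x)).
Proof.
move=> Ht; split.
  move=> [U [HU [[Hx Hy]|[Hy Hx]]]] [H1 H2].
    by move: Hy; rewrite (open_up HU Hx H1).
  by move: Hx; rewrite (open_up HU Hy H2).
move=> H; case E1: (sle tau x y).
  case E2: (sle tau y x); first by case: H.
  exists [set z | sle tau y z]; split; first exact: up_open.
  by right; rewrite !inE sle_refl E2.
exists [set z | sle tau x z]; split; first exact: up_open.
by left; rewrite !inE sle_refl E1.
Qed.

Lemma T1_iff (X : finType) (tau : {set {set X}}) x y : is_topology tau ->
  (T1_sep tau x y <-> ~ (sle tau x y \/ sle tau y x)).
Proof.
move=> Ht; split.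
  move=> [Ux [Uy [HUx [HUy [Hx [Hy [Hy' Hx']]]]]]] [H|H].
    by move: Hy; rewrite (open_up HUx Hx H).
  by move: Hx'; rewrite (open_up HUy Hy' H).
move=> H; exists [set z | sle tau x z], [set z | sle tau y z].
do 2 (split; first exact: up_open).
rewrite !inE !sle_refl; split => //; split; first by apply/negP => ?; apply: H; left.
by split => //; apply/negP => ?; apply: H; right.
Qed.

Lemma T2_iff (X : finType) (tau : {set {set X}}) x y : is_topology tau ->
  (T2_sep tau x y <-> ~ (exists z, sle tau x z /\ sle tau y z)).
Proof.
move=> Ht; split.
  move=> [Ux [Uy [HUx [HUy [Hx [Hy E]]]]]] [z [H1 H2]].
  have : z \in Ux :&: Uy by rewrite inE (open_up HUx Hx H1) (open_up HUy Hy H2).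
  by rewrite E inE.
move=> H; exists [set z | sle tau x z], [set z | sle tau y z].
do 2 (split; first exact: up_open).
rewrite !inE !sle_refl; do 2 split => //.
apply/setP => z; rewrite !inE; apply/negP => /andP[H1 H2]; apply: H; by exists z.
Qed.

Lemma T3a_iff (X : finType) (tau : {set {set X}}) x y : is_topology tau ->
  (T3a_sep tau x y <-> ~ A3 (sle tau) x y).
Proof.
move=> Ht; split.
  move=> [J [UJ [Uy [HJ [HUJ [HUy [Hx [HJU [Hy E]]]]]]]]] [a [b [H1 [H2 H3]]]].
  have Ha : a \in J.
    apply/negPn/negP => Ha; move: HJ; rewrite /cls => HJ.
    have : x \in ~: J by apply: (open_up HJ) H1; rewrite inE Ha.
    by rewrite inE Hx.
  have Hb : b \in UJ := open_up HUJ (subsetP HJU _ Ha) H2.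
  have : b \in UJ :&: Uy by rewrite inE Hb (open_up HUy Hy H3).
  by rewrite E inE.
move=> H.
exists [set a | sle tau a x], [set b | [exists a, sle tau a x && sle tau a b]],
  [set z | sle tau y z].
split.
  rewrite /cls; apply: upclosed_open => // a b; rewrite !inE => Ha Hab.
  by apply/negP => Hb; move/negP: Ha; apply; apply: sle_trans Hab Hb.
split.
  apply: upclosed_open => // a b; rewrite !inE => /existsP[c /andP[H1 H2]] Hab.
  by apply/existsP; exists c; rewrite H1 (sle_trans H2 Hab).
split; first exact: up_open.
rewrite !inE !sle_refl; split => //; split.
  by apply/subsetP => a; rewrite !inE => Ha; apply/existsP; exists a; rewrite Ha sle_refl.
split => //; apply/setP => z; rewrite !inE; apply/negP => /andP[/existsP[a /andP[H1 H2]] H3].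
by apply: H; exists a, z.
Qed.

Lemma T3b_iff (X : finType) (tau : {set {set X}}) x y :
  T3b_sep tau x y <-> T3a_sep tau y x.
Proof.
split.
  move=> [K [Ux [UK [HK [HUx [HUK [Hx [Hy [HKU E]]]]]]]]].
  by exists K, UK, Ux; rewrite setIC.
move=> [K [UK [Ux [HK [HUK [HUx [Hy [HKU [Hx E]]]]]]]]].
by exists K, Ux, UK; rewrite setIC.
Qed.

Lemma T4_iff (X : finType) (tau : {set {set X}}) x y : is_topology tau ->
  (T4_sep tau x y <-> ~ A4 (sle tau) x y).
Proof.
move=> Ht; split.
  move=> [J [K [UJ [UK [HJ [HK [HUJ [HUK [Hx [HJU [Hy [HKU E]]]]]]]]]]]].
  move=> [a [b [c [H1 [H2 [H3 H4]]]]]].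
  have Ha : a \in J.
    apply/negPn/negP => Ha; move: HJ; rewrite /cls => HJ.
    have : x \in ~: J by apply: (open_up HJ) H1; rewrite inE Ha.
    by rewrite inE Hx.
  have Hb : b \in K.
    apply/negPn/negP => Hb; move: HK; rewrite /cls => HK.
    have : y \in ~: K by apply: (open_up HK) H2; rewrite inE Hb.
    by rewrite inE Hy.
  have : c \in UJ :&: UK.
    by rewrite inE (open_up HUJ (subsetP HJU _ Ha) H3) (open_up HUK (subsetP HKU _ Hb) H4).
  by rewrite E inE.
move=> H.
exists [set a | sle tau a x], [set a | sle tau a y],
  [set b | [exists a, sle tau a x && sle tau a b]],
  [set b | [exists a, sle tau a y && sle tau a b]].
have cl : forall w, cls tau [set a | sle tau a w].
  move=> w; rewrite /cls; apply: upclosed_open => // a b; rewrite !inE => Ha Hab.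
  by apply/negP => Hb; move/negP: Ha; apply; apply: sle_trans Hab Hb.
have op : forall w, opn tau [set b | [exists a, sle tau a w && sle tau a b]].
  move=> w; apply: upclosed_open => // a b; rewrite !inE => /existsP[c /andP[H1 H2]] Hab.
  by apply/existsP; exists c; rewrite H1 (sle_trans H2 Hab).
have sub : forall w, [set a | sle tau a w] \subset [set b | [exists a, sle tau a w && sle tau a b]].
  by move=> w; apply/subsetP => a; rewrite !inE => Ha; apply/existsP; exists a; rewrite Ha sle_refl.
do 4 (split; first by []).
rewrite !inE !sle_refl; do 4 (split; first by []).
apply/setP => z; rewrite !inE; apply/negP => /andP[/existsP[a /andP[H1 H2]] /existsP[b /andP[H3 H4]]].
by apply: H; exists a, b, z.
Qed.

Definition pgraph (i : sep_axiom) : forall X : finType, rel X -> X -> X -> Prop :=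
  match i with
  | ST0 => fun X r x y => x <> y /\ r x y /\ r y x
  | ST1 => comparability_graph
  | ST2 => ub_graph
  | ST3' => half_closed_ub_graph
  | ST3'' => fully_closed_ub_graph
  | ST4 => extended_closed_ub_graph
  end.

Lemma NN (P : Prop) : ~ ~ P <-> P.
Proof. split; [exact: NNPP | tauto]. Qed.

Lemma sep_char (i : sep_axiom) (X : finType) (tau : {set {set X}}) x y :
  is_topology tau -> (sep_graph i tau x y <-> pgraph i (sle tau) x y).
Proof.
move=> Ht; rewrite /sep_graph; case: i => /=.
- by rewrite T0_iff // NN.
- by rewrite T1_iff // NN.
- by rewrite T2_iff // NN.
- rewrite /T3'_sep T3b_iff !T3a_iff // /A3.
  split; move=> [Hne H]; split => //.
    by split; apply: NNPP => C; apply: H; [left|right].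
  by move=> [C|C]; apply: C; case: H.
- rewrite /T3''_sep T3b_iff !T3a_iff // /A3.
  split; move=> [Hne H]; split => //.
    by apply: NNPP => C; apply: H; split => C'; apply: C; [left|right].
  by move=> [C1 C2]; case: H.
- by rewrite T4_iff // NN.
Qed.

Definition preorder (X : finType) (r : rel X) := reflexive r /\ transitive r.

Definition topo (X : finType) (r : rel X) : {set {set X}} :=
  [set U : {set X} | [forall a, forall b, (a \in U) ==> r a b ==> (b \in U)]].

Lemma topoP (X : finType) (r : rel X) (U : {set X}) :
  reflect (forall a b, a \in U -> r a b -> b \in U) (U \in topo r).
Proof.
rewrite inE; apply: (iffP forallP) => H.
  by move=> a b Ha Hab; move: (forallP (H a) b); rewrite Ha Hab.
by move=> a; apply/forallP => b; apply/implyP => Ha; apply/implyP; apply: H.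
Qed.

Lemma topo_top (X : finType) (r : rel X) : is_topology (topo r).
Proof.
split; first by apply/topoP => a b; rewrite inE.
split; first by apply/topoP => a b; rewrite inE.
move=> U V /topoP HU /topoP HV; split; apply/topoP => a b; rewrite !inE.
  by case/orP => H Hab; apply/orP; [left; apply: HU H Hab | right; apply: HV H Hab].
by case/andP => H1 H2 Hab; rewrite (HU _ _ H1 Hab) (HV _ _ H2 Hab).
Qed.

Lemma sle_topo (X : finType) (r : rel X) : preorder r -> sle (topo r) = r.
Proof.
move=> [Hre Htr].
apply: functional_extensionality => x; apply: functional_extensionality => y.
apply/idP/idP.
  move/sleP => H; have : y \in [set z | r x z]; last by rewrite inE.
  apply: H; last by rewrite inE.
  by apply/topoP => a b; rewrite !inE => H1 H2; apply: Htr H1 H2.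
by move=> Hxy; apply/sleP => U /topoP HU Hx; apply: HU Hx Hxy.
Qed.

Definition refine (X : finType) (r : rel X) : rel X :=
  fun x y => r x y && (~~ r y x || (enum_rank x <= enum_rank y)).

Lemma refine_poset (X : finType) (r : rel X) : preorder r -> is_poset (refine r).
Proof.
move=> [Hre Htr]; rewrite /refine; split; first by move=> x; rewrite Hre leqnn orbT.
split.
  move=> x y /andP[/andP[H1 H2] /andP[H3 H4]]; move: H2 H4; rewrite H1 H3 /= => H2 H4.
  by apply: enum_rank_inj; apply: val_inj; apply/eqP; rewrite eqn_leq H2 H4.
move=> y x z /andP[H1 H2] /andP[H3 H4]; rewrite (Htr _ _ _ H1 H3) /=.
case E: (r z x) => //=.
have Eyx : r y x by apply: Htr H3 E.
have Ezy : r z y by apply: Htr E H1.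
move: H2 H4; rewrite Eyx Ezy /= => H2 H4; exact: leq_trans H2 H4.
Qed.

Lemma refine_sub (X : finType) (r : rel X) x y : refine r x y -> r x y.
Proof. by case/andP. Qed.

Lemma refine_bot (X : finType) (r : rel X) a : preorder r ->
  exists a', forall w, r a w -> refine r a' w.
Proof.
move=> [Hre Htr].
have Pa : [pred i | r i a && r a i] a by rewrite /= Hre.
case: (@arg_minnP X a [pred i | r i a && r a i] (fun i => nat_of_ord (enum_rank i)) Pa) => a' /andP[H1 H2] Hmin.
exists a' => w Haw; rewrite /refine (Htr _ _ _ H1 Haw) /=.
case E: (r w a') => //=; apply: Hmin; by rewrite /= (Htr _ _ _ E H1) Haw.
Qed.

Lemma refine_topel (X : finType) (r : rel X) b : preorder r ->
  exists b', forall w, r w b -> refine r w b'.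
Proof.
move=> [Hre Htr].
have Pb : [pred i | r i b && r b i] b by rewrite /= Hre.
case: (@arg_maxnP X b [pred i | r i b && r b i] (fun i => nat_of_ord (enum_rank i)) Pb) => b' /andP[H1 H2] Hmax.
exists b' => w Hwb; rewrite /refine (Htr _ _ _ Hwb H2) /=.
case E: (r b' w) => //=; apply: Hmax; by rewrite /= Hwb (Htr _ _ _ H2 E).
Qed.

Lemma refine_char (i : sep_axiom) (X : finType) (r : rel X) x y : i <> ST0 ->
  preorder r -> (pgraph i r x y <-> pgraph i (refine r) x y).
Proof.
move=> Hi Hp; have [Hre Htr] := Hp.
have sub := @refine_sub X r.
have bot := @refine_bot X r _ Hp.
have top := @refine_topel X r _ Hp.
have A3R : forall u v, A3 r u v <-> A3 (refine r) u v.
  move=> u v; split; last by move=> [a [b [H1 [H2 H3]]]]; exists a, b; auto.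
  move=> [a [b [H1 [H2 H3]]]].
  have [a' Ha'] := bot a; have [b' Hb'] := top b.
  exists a', b'; split; first exact: Ha'.
  split; last exact: Hb'.
  by apply: Ha'; apply: Htr H2 (sub _ _ (Hb' b (Hre b))).
case: i Hi => //= _.
- rewrite /comparability_graph; split; move=> [Hne H]; split => //; last first.
    by case: H => H; [left|right]; apply: sub.
  rewrite /refine; case: H => H; rewrite H /=.
    case E: (r y x) => /=; last by left.
    by case: (leqP (enum_rank x) (enum_rank y)) => L; [left | right; rewrite ltnW].
  case E: (r x y) => /=; last by right.
  by case: (leqP (enum_rank y) (enum_rank x)) => L; [right | left; rewrite ltnW].
- rewrite /ub_graph; split; move=> [Hne [z [H1 H2]]]; split => //.
    by have [z' Hz] := top z; exists z'; split; apply: Hz.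
  by exists z; split; apply: sub.
- by rewrite /half_closed_ub_graph -!/(A3 _ _ _) !A3R.
- by rewrite /fully_closed_ub_graph -!/(A3 _ _ _) !A3R.
- rewrite /extended_closed_ub_graph; split; move=> [Hne H]; split => //; last first.
    by case: H => [a [b [c [H1 [H2 [H3 H4]]]]]]; exists a, b, c; auto.
  case: H => [a [b [c [H1 [H2 [H3 H4]]]]]].
  have [a' Ha'] := bot a; have [b' Hb'] := bot b; have [c' Hc'] := top c.
  have Hcc' : r c c' := sub _ _ (Hc' c (Hre c)).
  exists a', b', c'; split; first exact: Ha'.
  split; first exact: Hb'.
  by split; [apply: Ha'; apply: Htr H3 Hcc' | apply: Hb'; apply: Htr H4 Hcc'].
Qed.

Lemma sle_pre (X : finType) (tau : {set {set X}}) : preorder (sle tau).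
Proof. split; first exact: sle_refl. by move=> y x z; apply: sle_trans. Qed.

Lemma gen (i : sep_axiom) (T : finType) (e : T -> T -> Prop) : i <> ST0 ->
  (in_Gclass i e <-> is_poset_graph (pgraph i) e).
Proof.
move=> Hi; split.
  move=> [X [tau [Ht [f [Hf Hiso]]]]].
  exists X, (refine (sle tau)); split; first exact: refine_poset (sle_pre tau).
  exists f; split => // x y; rewrite Hiso sep_char //; exact: refine_char (sle_pre tau).
move=> [X [le [[Hre [_ Htr]] [f [Hf Hiso]]]]].
have Hp : preorder le by [].
exists X, (topo le); split; first exact: topo_top.
exists f; split => // x y; rewrite Hiso sep_char; last exact: topo_top. by rewrite sle_topo.
Qed.

Theorem theorem1p3 (T : finType) (e : T -> T -> Prop) :
  simple_graph e ->
  (in_Gclass ST0 e <-> disjoint_union_of_cliques e) /\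
  (in_Gclass ST1 e <-> is_poset_graph comparability_graph e) /\
  (in_Gclass ST2 e <-> is_poset_graph ub_graph e) /\
  (in_Gclass ST3' e <-> is_poset_graph half_closed_ub_graph e) /\
  (in_Gclass ST3'' e <-> is_poset_graph fully_closed_ub_graph e) /\
  (in_Gclass ST4 e <-> is_poset_graph extended_closed_ub_graph e).
Proof.
move=> [Hirr Hsym].
split; last first.
  by do 4 (split; first exact: (@gen _ T e)); exact: (@gen ST4 T e).
split.
  move=> [X [tau [Ht [f [Hf Hiso]]]]].
  pose cl (u : X) := [set z | sle tau u z && sle tau z u].
  exists (fun t => nat_of_ord (enum_rank (cl (f t)))) => x y Hxy.
  have Hfne : f x <> f y by move=> E; apply: Hxy; apply: (bij_inj Hf).
  rewrite Hiso sep_char //=; split.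
    move=> [_ [H1 H2]]; congr nat_of_ord; congr enum_rank; apply/setP => z; rewrite !inE.
    apply/andP/andP => [[A B]|[A B]]; split.
    - exact: sle_trans H2 A.
    - exact: sle_trans B H1.
    - exact: sle_trans H1 A.
    - exact: sle_trans B H2.
  move=> E; have E' : cl (f x) = cl (f y) by apply: enum_rank_inj; apply: val_inj.
  have : f x \in cl (f y) by rewrite -E' inE sle_refl.
  by rewrite inE => /andP[A B].
move=> [c Hc].
pose r : rel T := fun x y => c x == c y.
have Hp : preorder r by split; [move=> x; exact: eqxx | move=> y x z; rewrite /r => /eqP -> /eqP ->].
exists T, (topo r); split; first exact: topo_top.
exists id; split; first by exists id.
move=> x y; rewrite sep_char; last exact: topo_top. rewrite sle_topo //=; rewrite /r; split.
  move=> Hxy; have Hne : x <> y by move=> E; subst; exact: Hirr Hxy.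
  by split => //; move/(Hc _ _ Hne): Hxy => ->.
move=> [Hne [/eqP H1 _]]; exact/(Hc _ _ Hne).
Qed.
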